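(* Let $A$ be a Nakayama algebra of finite global dimension. Then the magnitude $m_A$ equals the number of simple $A$-modules of even projective dimension, and also equals the number of vertices lying on a cycle in the resolution quiver of $A$.
   Context: Nakayama algebras are connected finite-dimensional algebras over an algebraically closed field $K$ all of whose indecomposable modules are uniserial, given as bound quiver algebras on a linear quiver $0\to\cdots\to n-1$ or cyclic quiver $0\to\cdots\to n-1\to 0$ with admissible relations; the Kupisch series is $[c_0,\dots,c_{n-1}]$ with $c_i=\dim_K e_iA$. The Cartan matrix $\mathbf C_A$ has entries $\dim_K e_iAe_j$; for $A$ of finite global dimension it is invertible, and the magnitude $m_A$ is the sum of all entries of $\mathbf C_A^{-1}$. The resolution quiver of $A$ has vertex set $\mathbb Z/n\mathbb Z$ and an arrow $i\to j$ whenever $j\equiv i+c_i \pmod n$. *)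

(* Defs.v *)
(* A connected Nakayama algebra over an algebraically closed
   field is determined up to isomorphism by its quiver type and Kupisch series
   [c_0,...,c_{n-1}]; we encode A by (n, c) with c : nat -> nat (only the
   values c 0, ..., c (n-1) matter). Convention: the indecomposable projective
   P_i = e_i A is uniserial with composition factors S_i, S_{i+1}, ...,
   S_{i+c_i-1} (indices mod n), from top to socle. *)
From mathcomp Require Import all_boot all_order all_algebra.
Set Implicit Arguments.
Unset Strict Implicit.
Unset Printing Implicit Defensive.
Import GRing.Theory Num.Theory.
Local Open Scope ring_scope.

Definition linear_kupisch (n : nat) (c : nat -> nat) : Prop :=
  [/\ (0 < n)%N, c n.-1 = 1%N,
      (forall i, (i < n.-1)%N -> (2 <= c i)%N) &
      (forall i, (i.+1 < n)%N -> (c i <= (c i.+1).+1)%N)].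

Definition cyclic_kupisch (n : nat) (c : nat -> nat) : Prop :=
  (0 < n)%N /\
  (forall i, (i < n)%N -> (2 <= c i)%N /\ (c i <= (c (i.+1 %% n)%N).+1)%N).

Definition nakayama_kupisch (n : nat) (c : nat -> nat) : Prop :=
  linear_kupisch n c \/ cyclic_kupisch n c.

(* Uniserial module M(j,l): top S_j, length l (1 <= l <= c_j).
   Its projective cover is P_j and its first syzygy is M(j+l mod n, c_j - l)
   when l < c_j; it is projective when l = c_j.
   [has_pd n c j l d] : M(j,l) has projective dimension d. *)
Inductive has_pd (n : nat) (c : nat -> nat) : nat -> nat -> nat -> Prop :=
| pd_proj j l : l = c j -> has_pd n c j l 0
| pd_step j l d : (l < c j)%N -> has_pd n c ((j + l) %% n) (c j - l) d ->
    has_pd n c j l d.+1.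

Definition simple_pd (n : nat) (c : nat -> nat) (i d : nat) : Prop :=
  has_pd n c i 1 d.

Definition fin_gldim (n : nat) (c : nat -> nat) : Prop :=
  forall i, (i < n)%N -> exists d, simple_pd n c i d.

(* Cartan matrix: C i j = dim e_i A e_j = multiplicity of S_j in P_i. *)
Definition cartan (n : nat) (c : nat -> nat) : 'M[rat]_n :=
  \matrix_(i < n, j < n)
    (count (fun k => ((i + k) %% n)%N == (j : nat)) (iota 0 (c i)))%:R.

Definition magnitude (n : nat) (c : nat -> nat) : rat :=
  \sum_(i < n) \sum_(j < n) invmx (cartan n c) i j.

(* resolution quiver: arrow i -> i + c_i mod n *)
Definition res_map (n : nat) (c : nat -> nat) (i : nat) : nat := ((i + c i) %% n)%N.

Definition on_res_cycle (n : nat) (c : nat -> nat) (i : nat) : Prop :=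
  exists k, (0 < k)%N /\ iter k (res_map n c) i = i.

(* Main.v *)
Require Import Defs.
From mathcomp Require Import all_boot all_order all_algebra.
From Stdlib Require Import ClassicalEpsilon.
Set Implicit Arguments. Unset Strict Implicit. Unset Printing Implicit Defensive.
Import GRing.Theory Num.Theory.
Local Open Scope ring_scope.

Definition pb (P : Prop) : bool := if excluded_middle_informative P then true else false.
Lemma pbP P : reflect P (pb P).
Proof. rewrite /pb; case: excluded_middle_informative => h; constructor; done. Qed.

Section S.
Variable n : nat.
Variable c : nat -> nat.
Local Notation N := n.+1.
Local Notation C := (cartan N c).

Definition vrow (j l : nat) : 'rV[rat]_N :=
  \row_(m < N) (count (fun k => ((j + k) %% N)%N == (m : nat)) (iota 0 l))%:R.

Lemma vrowD j a b : vrow j (a + b) = vrow j a + vrow ((j + a) %% N) b.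
Proof.
apply/rowP => m; rewrite !mxE iotaD count_cat natrD add0n.
congr (_ + _%:R).
rewrite -{1}(addn0 a) iotaDl count_map. apply: eq_count => k /=.
by rewrite modnDml addnA.
Qed.

Lemma rowC (i : 'I_N) : row i C = vrow i (c i).
Proof. by apply/rowP => m; rewrite !mxE. Qed.

Lemma vrow1 (j : 'I_N) : vrow j 1 = delta_mx 0 j.
Proof.
apply/rowP => m; rewrite !mxE /= addn0 modn_small //.
rewrite addn0; case: (m =P j) => [-> | h]; first by rewrite eqxx.
by case: eqP => // /val_inj E; case: h.
by rewrite addn0.
Qed.

Lemma count_full j (m : 'I_N) :
  count (fun k => ((j + k) %% N)%N == (m : nat)) (iota 0 N) = 1%N.
Proof.
set t := ((m + (N - j %% N)) %% N)%N.
have tN : (t < N)%N by rewrite ltn_pmod.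
rewrite (@eq_in_count _ _ (pred1 t)); last first.
  move=> k; rewrite mem_iota add0n /= => kN.
  rewrite -{1}(modn_small (ltn_ord m)).
  have -> : (m = j + t %[mod N])%N.
    have jl : (j %% N <= N)%N by rewrite ltnW // ltn_pmod.
    rewrite /t -modnDml modnDmr addnCA subnKC //.
    by rewrite modnDr.
  by rewrite eqn_modDl !modn_small.
by rewrite count_uniq_mem ?iota_uniq // mem_iota add0n tN.
Qed.

Lemma vrowN j : vrow j N = const_mx 1.
Proof. by apply/rowP => m; rewrite !mxE count_full. Qed.

Lemma vrowM j q : vrow j (q * N) = q%:R *: const_mx 1.
Proof.
elim: q j => [|q IH] j.
  by apply/rowP => m; rewrite !mxE mul0r.
by rewrite mulSn vrowD IH vrowN mulrSr scalerDl scale1r addrC.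
Qed.

Lemma sum_delta (j : 'I_N) : \sum_m (delta_mx 0 j : 'rV[rat]_N) 0 m = 1.
Proof.
rewrite (bigD1 j) //= big1 ?addr0; first by rewrite mxE !eqxx.
move=> m mj; rewrite mxE /=; case: eqP => // E; by rewrite E eqxx in mj.
Qed.

Lemma pd_vec j l d : has_pd N c j l d -> (j < N)%N -> exists w : 'rV[rat]_N,
  [/\ w *m C = vrow j l, \sum_m w 0 m = (~~ odd d)%:R & forall m, w 0 m \is a Num.int].
Proof.
elim => {j l d} [j l -> | j l d lt _ IH] jN.
  exists (delta_mx 0 (Ordinal jN)); split.
  - by rewrite -rowE rowC.
  - by rewrite sum_delta.
  - by move=> m; rewrite mxE natr_int.
have [w [H1 H2 H3]] := IH (ltn_pmod _ (ltn0Sn n)).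
exists (delta_mx 0 (Ordinal jN) - w); split.
- rewrite mulmxBl -rowE rowC H1 /= -{1}(subnKC (ltnW lt)) vrowD.
  by rewrite addrK.
- rewrite (eq_bigr (fun m => (delta_mx 0 (Ordinal jN) : 'rV[rat]_N) 0 m - w 0 m)); last first.
    by move=> m _; rewrite !mxE.
  rewrite sumrB sum_delta H2 /=; by case: (odd d); rewrite ?subr0 ?subrr.
- by move=> m; rewrite !mxE rpredB ?natr_int.
Qed.

Lemma has_pd_uniq j l d1 d2 : has_pd N c j l d1 -> has_pd N c j l d2 -> d1 = d2.
Proof.
move=> H; elim: H d2 => [j' l' e | j' l' d lt _ IH] d2 H2; inversion H2; subst => //.
all: try by (exfalso; move: H; rewrite ltnn).
all: try by (exfalso; move: lt; rewrite ltnn).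
by rewrite (IH _ H0).
Qed.

Local Notation f := (res_map N c).

Lemma iter_lt i k : (i < N)%N -> (iter k f i < N)%N.
Proof. by case: k => // k _; rewrite iterS /res_map ltn_pmod. Qed.

Lemma cycle_sum i p : (i < N)%N ->
  \sum_(k < p) vrow (iter k f i) (c (iter k f i)) = vrow i (\sum_(k < p) c (iter k f i)) /\
  ((i + \sum_(k < p) c (iter k f i)) %% N)%N = iter p f i.
Proof.
move=> iN; elim: p => [|p [IH1 IH2]].
  by rewrite !big_ord0 addn0 modn_small //; split => //; apply/rowP => m; rewrite !mxE.
rewrite !big_ord_recr /= vrowD IH1 IH2; split => //.
by rewrite addnA -modnDml IH2.
Qed.

End S.

Theorem proposition4p2 (n : nat) (c : nat -> nat) :
  nakayama_kupisch n c -> fin_gldim n c ->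
  cartan n c \in unitmx /\
  (exists E : {set 'I_n},
      (forall i : 'I_n, i \in E <-> exists d, simple_pd n c i d /\ ~~ odd d) /\
      magnitude n c = #|E|%:R) /\
  (exists V : {set 'I_n},
      (forall i : 'I_n, i \in V <-> on_res_cycle n c i) /\
      magnitude n c = #|V|%:R).
Proof.
case: n => [|n] Hk Hfin.
  by exfalso; case: Hk => [[H _ _ _]|[H _]]; rewrite ltnn in H.
have cpos : forall i, (i < n.+1)%N -> (0 < c i)%N.
  case: Hk => [[_ Hl Hge _]|[_ H]] i Hi.
  - case: (ltnP i n) => h; first by have := Hge i h; case: (c i).
    have -> : i = n by apply/eqP; rewrite eqn_leq h -ltnS Hi.
    by rewrite -[n]/(n.+1.-1) Hl.
  - by case: (H i Hi); case: (c i).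
set C := cartan n.+1 c.
have Hw : forall j : 'I_n.+1, exists w : 'rV[rat]_n.+1,
   [/\ w *m C = delta_mx 0 j,
       \sum_m w 0 m = (pb (exists d, simple_pd n.+1 c j d /\ ~~ odd d))%:R &
       forall m, w 0 m \is a Num.int].
  move=> j; have [d Hd] := Hfin j (ltn_ord j).
  have [w [H1 H2 H3]] := pd_vec Hd (ltn_ord j).
  exists w; split => //; first by rewrite H1 vrow1.
  rewrite H2; case: pbP => [[d' [Hd' ev]]|nE].
    by rewrite (has_pd_uniq Hd Hd') ev.
  case: (boolP (odd d)) => ev /=; first by [].
  by exfalso; apply: nE; exists d.
have [wf wfP] : exists wf : 'I_n.+1 -> 'rV[rat]_n.+1, forall j,
   [/\ wf j *m C = delta_mx 0 j,
       \sum_m wf j 0 m = (pb (exists d, simple_pd n.+1 c j d /\ ~~ odd d))%:R &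
       forall m, wf j 0 m \is a Num.int].
  exists (fun j => projT1 (constructive_indefinite_description _ (Hw j))) => j.
  exact: projT2 (constructive_indefinite_description _ (Hw j)).
pose W : 'M[rat]_n.+1 := \matrix_(j, m) wf j 0 m.
have rowW j : row j W = wf j by apply/rowP => m; rewrite !mxE.
have WC : W *m C = 1%:M.
  apply/row_matrixP => j; rewrite row_mul rowW row1; by case: (wfP j).
have [_ Cu] := mulmx1_unit WC.
have iC : invmx C = W.
  by rewrite -[LHS]mul1mx -WC -mulmxA mulmxV // mulmx1.
have CW : C *m W = 1%:M by rewrite -iC mulmxV.
have Wint : forall j m, W j m \is a Num.int by move=> j m; rewrite mxE; case: (wfP j).
split => //.
split.
  exists [set i : 'I_n.+1 | pb (exists d, simple_pd n.+1 c i d /\ ~~ odd d)]; split.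
    by move=> i; rewrite inE; split => [/pbP|/pbP].
  rewrite /magnitude -/C iC -sumr_const [RHS]big_mkcond /=.
  apply: eq_bigr => i _; rewrite inE.
  have [_ H2 _] := wfP i.
  rewrite (eq_bigr (fun m => wf i 0 m)) ?H2; first by case: pb.
  by move=> m _; rewrite mxE.
pose f := res_map n.+1 c.
pose ones : 'rV[rat]_n.+1 := const_mx 1.
pose y := ones *m W.
have yU : forall z, z *m C = ones -> z = y.
  by move=> z zC; rewrite /y -zC -mulmxA CW mulmx1.
have yint : forall m, y 0 m \is a Num.int.
  move=> m; rewrite /y mxE; apply: rpred_sum => j _; rewrite mxE rpredM //.
have mag : magnitude n.+1 c = \sum_m y 0 m.
  rewrite /magnitude -/C iC /y exchange_big /=; apply: eq_bigr => m _; rewrite mxE.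
  by apply: eq_bigr => j _; rewrite !mxE mul1r.
have per : forall (i : 'I_n.+1) p, (0 < p)%N -> iter p f i = i ->
    exists2 q, (0 < q)%N & forall m : 'I_n.+1,
      y 0 m = q%:R^-1 * (\sum_(k < p) (iter k f i == m))%N%:R.
  move=> i p p0 ip.
  have [S1 S2] := cycle_sum c p (ltn_ord i).
  pose S := (\sum_(k < p) c (iter k (res_map n.+1 c) i))%N; rewrite -/S in S1 S2.
  have Spos : (0 < S)%N.
    rewrite /S; case: p p0 {ip S1 S2 S} => // p _.
    by rewrite big_ord_recl addn_gt0 /= cpos.
  have [q q0 SE] : exists2 q, (0 < q)%N & S = (q * n.+1)%N.
    have : (i + S == i + 0 %[mod n.+1])%N.
      by rewrite addn0 S2 -/f ip modn_small.
    rewrite eqn_modDl mod0n => /eqP Sm.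
    have dS : (n.+1 %| S)%N by rewrite /dvdn Sm.
    exists (S %/ n.+1)%N; last by rewrite divnK.
    by rewrite divn_gt0 // dvdn_leq.
  exists q => // m.
  have -> : y = q%:R^-1 *: \sum_(k < p) delta_mx 0 (inord (iter k f i)).
    apply/esym/yU. rewrite -scalemxAl mulmx_suml.
    under eq_bigr => k _ do rewrite -rowE rowC inordK ?iter_lt //.
    rewrite S1 SE vrowM scalerA mulVf ?scale1r //.
    by rewrite pnatr_eq0 -lt0n.
  rewrite !mxE summxE natr_sum; congr (_ * _); apply: eq_bigr => k _.
  by rewrite mxE /= -(inj_eq val_inj) /= inordK ?iter_lt // eq_sym.
have ycyc : forall m : 'I_n.+1, on_res_cycle n.+1 c m -> y 0 m = 1.
  move=> m Hm.
  have ex : exists k, (0 < k)%N && (iter k f m == m).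
    by case: Hm => k [k0 kE]; exists k; rewrite k0 /f kE eqxx.
  case: (ex_minnP ex) => p /andP[p0 /eqP pE] pmin.
  have [q q0 yq] := per m p p0 pE.
  have s1 : (\sum_(k < p) (iter k f m == m))%N = 1%N.
    case: p p0 pE pmin {yq} => // p _ pE pmin.
    rewrite big_ord_recl /= eqxx big1 ?addn0 // => k _.
    case: eqP => // E; exfalso.
    have := pmin k.+1; rewrite add0n in E; rewrite iterS E eqxx /= => /(_ isT).
    by rewrite ltnS leqNgt ltn_ord.
  have yi := yint m; rewrite yq s1 mulr1 in yi *.
  have q1 : q = 1%N.
    have qi0 : 0 < (q%:R : rat)^-1 by rewrite invr_gt0 ltr0n.
    have := norm_intr_ge1 yi (lt0r_neq0 qi0).
    rewrite ger0_norm; last by rewrite invr_ge0 ler0n.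
    move=> h.
    have h2 : (1 : rat) <= (q%:R : rat)^-1 by exact: h.
    move: h2; rewrite invf_ge1 ?ltr0n // lern1 => q1.
    by apply/eqP; rewrite eqn_leq q1 q0.
  by rewrite q1 invr1.
have [i0 [p0 [p0pos i0p]]] : exists i0 : 'I_n.+1, exists p, (0 < p)%N /\ iter p f i0 = i0.
  have H : forall a b : nat, (a < b)%N -> iter a f 0 = iter b f 0 ->
      exists i0 : 'I_n.+1, exists p, (0 < p)%N /\ iter p f i0 = i0.
    move=> a b lab E; exists (inord (iter a f 0)); exists (b - a)%N; split.
      by rewrite subn_gt0.
    rewrite inordK; last exact: iter_lt.
    rewrite -iterD subnK; last exact: ltnW.
    exact: (esym E).
  pose g (k : 'I_n.+2) : 'I_n.+1 := inord (iter k f 0).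
  have : ~~ injectiveb g.
    by apply/negP => /injectiveP inj; have := @leq_card _ _ g inj; rewrite !card_ord ltnn.
  case/injectivePn => a [b ab gab].
  have gE : iter a f 0 = iter b f 0.
    by move: gab => /(congr1 (@nat_of_ord _)); rewrite /g !inordK ?iter_lt.
  case: (ltngtP a b) => hab.
  - exact: H hab gE.
  - exact: H hab (esym gE).
  - by move/eqP: ab; case; apply: val_inj.
have [q0 _ yq0] := per i0 p0 p0pos i0p.
have ync : forall m : 'I_n.+1, ~ on_res_cycle n.+1 c m -> y 0 m = 0.
  move=> m nm; rewrite yq0 big1 ?mulr0 // => k _.
  case: eqP => // E; exfalso; apply: nm.
  exists p0; split => //.
  by rewrite -E -iterD addnC iterD i0p.
exists [set i : 'I_n.+1 | pb (on_res_cycle n.+1 c i)]; split.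
  by move=> i; rewrite inE; split => [/pbP|/pbP].
rewrite mag -sumr_const [RHS]big_mkcond /=; apply: eq_bigr => m _; rewrite inE.
case: pbP => h; [exact: ycyc | exact: ync].
Qed.
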